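(* Let $\tilde F:\mathbb C^8\to\mathbb C^8$ be a homogeneous (polynomial, degree $p$) vector field equivariant with respect to the $[8,8]$ representation of $\Gamma=D_4\dot+T^2$. Then there exists an $\mathcal E(2)$-equivariant polynomial vector field $\mathcal F$ of degree $p$ on $E_\kappa$ with $\tilde F=\mathcal F|_{E^c}$ if and only if for every $\theta\in\mathbb R$, $R_\theta\tilde F(\Phi)=\tilde F(R_\theta\Phi)$ for all $\Phi\in E^c$ with $R_\theta\Phi\in E^c$.
   Context: Integers $l_1>l_2$, $l_1>n_1>0$, $l_2>n_2>0$ with $\kappa^2=l_1^2+n_1^2=l_2^2+n_2^2$; $A(\kappa)=\{k:|k|=\kappa\}$, $E_\kappa$ = space of $a:A(\kappa)\to\mathbb C$ with $\sum|a(k)|<\infty$. Wave vectors $q_1=(l_1,n_1)$, $q_2=(l_1,-n_1)$, $q_3=(n_1,l_1)$, $q_4=(n_1,-l_1)$, $p_1=(l_2,n_2)$, $p_2=(l_2,-n_2)$, $p_3=(n_2,l_2)$, $p_4=(n_2,-l_2)$, $\tilde A=\{\pm q_i,\pm p_j\}$; $E^c\subset E_\kappa$ is the real space of $a$ supported in $\tilde A$ with $a(-k)=\overline{a(k)}$, identified with $\mathbb C^8$ via $z_i=a(q_i)$, $w_j=a(p_j)$. $\mathcal E(2)$ acts by $(\gamma a)(k)=a(\gamma^{-1}k)$ ($\gamma\in O(2)$) and $(T_{s,t}a)(k)=e^{-i(sk_x+tk_y)}a(k)$; $R_\theta$ is counterclockwise rotation; $\Gamma$ is generated by $\gamma_1(x,y)=(-x,y)$,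 $\gamma_2(x,y)=(y,x)$ and $T_{s,t}$ with $(s,t)\in(\mathbb R/2\pi\mathbb Z)^2$. An $\mathcal E(2)$-equivariant polynomial vector field of degree $p$ on $E_\kappa$ is a map on finitely supported $a$ of the form $\mathcal F(a)(k)=\sum_{k_1,\dots,k_p\in A(\kappa)}P(k,k_1,\dots,k_p)a(k_1)\cdots a(k_p)$ (finitely many nonzero terms) commuting with all of $\mathcal E(2)$. *)

(* Defs.v *)
From HB Require Import structures.
From mathcomp Require Import all_boot all_order all_algebra.
From mathcomp Require Import all_classical all_reals.
From mathcomp Require Import exp trigo.
From mathcomp Require Import complex.
Set Implicit Arguments. Unset Strict Implicit. Unset Printing Implicit Defensive.
Import Order.TTheory GRing.Theory Num.Theory.
Local Open Scope ring_scope.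

Section Defs.
Variable R : realType.
Local Notation C := (R[i]).

Definition pt := (R * R)%type.
Definition ptN (k : pt) : pt := (- k.1, - k.2).

Definition onCircle (kap2 : R) (k : pt) : bool := k.1 ^+ 2 + k.2 ^+ 2 == kap2.

(* elements of E_kappa are represented by functions pt -> C; only their
   values on A(kappa) matter. *)
Definition efield := pt -> C.

Definition eqEk (kap2 : R) (a b : efield) : Prop :=
  forall k, onCircle kap2 k -> a k = b k.

Definition fsupp (kap2 : R) (a : efield) (s : seq pt) : Prop :=
  [/\ uniq s, all (onCircle kap2) s & forall k, a k != 0 -> k \in s].

Definition finsupp (kap2 : R) (a : efield) : Prop := exists s, fsupp kap2 a s.

(* polynomial vector efield of degree p:
   F(a)(k) = sum_{k_1..k_p in A(kappa)} P(k,k_1..k_p) a(k_1)...a(k_p),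
   the sum being over the (finite) support of a. *)
Definition isPolyVF (kap2 : R) (p : nat) (F : efield -> efield) : Prop :=
  exists P : pt -> p.-tuple pt -> C,
    forall (a : efield) (s : seq pt), fsupp kap2 a s ->
    forall k, onCircle kap2 k ->
      F a k = \sum_(f : {ffun 'I_p -> 'I_(size s)})
                 P k [tuple nth (0, 0) s (f i) | i < p] *
                 \prod_(i < p) a (nth (0, 0) s (f i)).

Definition mxapp (g : 'M[R]_2) (k : pt) : pt :=
  (g 0 0 * k.1 + g 0 1 * k.2, g 1 0 * k.1 + g 1 1 * k.2).

Definition orthogonal2 (g : 'M[R]_2) : Prop := g^T *m g = 1%:M.

Definition actO (g : 'M[R]_2) (a : efield) : efield :=
  fun k => a (mxapp (invmx g) k).

Definition expi (x : R) : C := Complex (cos x) (sin x).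

Definition actT (s t : R) (a : efield) : efield :=
  fun k => expi (- (s * k.1 + t * k.2)) * a k.

Definition E2equivariant (kap2 : R) (F : efield -> efield) : Prop :=
  forall a, finsupp kap2 a ->
    (forall g, orthogonal2 g -> eqEk kap2 (F (actO g a)) (actO g (F a))) /\
    (forall s t, eqEk kap2 (F (actT s t a)) (actT s t (F a))).

Definition rotmx (th : R) : 'M[R]_2 :=
  \matrix_(i < 2, j < 2)
    if i == 0 then (if j == 0 then cos th else - sin th)
    else (if j == 0 then sin th else cos th).

Definition gamma1 : 'M[R]_2 :=
  \matrix_(i < 2, j < 2) if i == j then (if i == 0 then -1 else 1) else 0.
Definition gamma2 : 'M[R]_2 :=
  \matrix_(i < 2, j < 2) if i == j then 0 else 1.

(* wave vectors q_1..q_4, p_1..p_4 (indices 0..7) *)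
Definition wv (l1 n1 l2 n2 : nat) (i : 'I_8) : pt :=
  match val i with
  | 0 => (l1%:R, n1%:R)
  | 1 => (l1%:R, - n1%:R)
  | 2 => (n1%:R, l1%:R)
  | 3 => (n1%:R, - l1%:R)
  | 4 => (l2%:R, n2%:R)
  | 5 => (l2%:R, - n2%:R)
  | 6 => (n2%:R, l2%:R)
  | _ => (n2%:R, - l2%:R)
  end.

Definition inAt (l1 n1 l2 n2 : nat) (k : pt) : bool :=
  [exists i : 'I_8, (k == wv l1 n1 l2 n2 i) || (k == ptN (wv l1 n1 l2 n2 i))].

(* E^c : a supported in tilde A (a subset of A(kappa), so a vanishes off the circle) with a(-k) = conj(a(k)) *)
Definition inEc (l1 n1 l2 n2 : nat) (a : efield) : Prop :=
  (forall k, a k != 0 -> inAt l1 n1 l2 n2 k) /\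
  (forall k, a (ptN k) = conjc (a k)).

(* identification E^c ~ C^8 : z_i = a(q_i), w_j = a(p_j) *)
Definition coordEc (l1 n1 l2 n2 : nat) (a : efield) : 'rV[C]_8 :=
  \row_i a (wv l1 n1 l2 n2 i).

Definition embEc (l1 n1 l2 n2 : nat) (z : 'rV[C]_8) : efield :=
  fun k => \sum_(i < 8)
    ((k == wv l1 n1 l2 n2 i)%:R * z 0 i +
     (k == ptN (wv l1 n1 l2 n2 i))%:R * conjc (z 0 i)).

(* homogeneous polynomial map of degree p on C^8 = R^16, i.e. each component
   is a homogeneous polynomial of degree p in (z, conj z) *)
Definition homogPoly (p : nat) (Ft : 'rV[C]_8 -> 'rV[C]_8) : Prop :=
  exists c : 'I_8 -> {ffun 'I_16 -> 'I_p.+1} -> C,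
    forall z j,
      Ft z 0 j =
        \sum_(m : {ffun 'I_16 -> 'I_p.+1} | (\sum_(i < 16) (m i : nat))%N == p)
          c j m * \prod_(i < 16)
             (if (i < 8)%N then z 0 (inord i) else conjc (z 0 (inord (i - 8)))) ^+ (m i).

(* equivariance w.r.t. the [8,8] representation of Gamma = D4 |x T^2 on
   C^8 ~ E^c, generated by gamma1, gamma2 and T_{s,t} *)
Definition Gamma_equivariant (l1 n1 l2 n2 : nat) (Ft : 'rV[C]_8 -> 'rV[C]_8) : Prop :=
  let emb := embEc l1 n1 l2 n2 in
  let crd := coordEc l1 n1 l2 n2 in
  (forall z, Ft (crd (actO gamma1 (emb z))) = crd (actO gamma1 (emb (Ft z)))) /\
  (forall z, Ft (crd (actO gamma2 (emb z))) = crd (actO gamma2 (emb (Ft z)))) /\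
  (forall s t z, Ft (crd (actT s t (emb z))) = crd (actT s t (emb (Ft z)))).

End Defs.

(* Main.v *)
Require Import Defs.
From HB Require Import structures.
From mathcomp Require Import all_boot all_order all_algebra.
From mathcomp Require Import all_classical all_reals.
From mathcomp Require Import exp trigo.
From mathcomp Require Import complex.
From mathcomp Require Import ring lra zify.
Import Order.TTheory GRing.Theory Num.Theory.
Local Open Scope ring_scope.
Set Implicit Arguments. Unset Strict Implicit. Unset Printing Implicit Defensive.
Section Generic.
Variable C : comRingType.

Definition ocons (T : Type) n (i : T) (f : 'I_n -> T) (x : 'I_n.+1) : T :=
  match unlift ord0 x with Some y => f y | None => i end.

Lemma sum_ffunS (I : finType) n (W : {ffun 'I_n.+1 -> I} -> C) :
  \sum_(f : {ffun 'I_n.+1 -> I}) W f =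
  \sum_(i : I) \sum_(f : {ffun 'I_n -> I}) W [ffun x => ocons i f x].
Proof.
rewrite pair_bigA /=.
pose h (q : I * {ffun 'I_n -> I}) : {ffun 'I_n.+1 -> I} := [ffun x => ocons q.1 q.2 x].
pose h' (g : {ffun 'I_n.+1 -> I}) : I * {ffun 'I_n -> I} := (g ord0, [ffun y => g (lift ord0 y)]).
rewrite (reindex h) /=; last first.
  exists h' => [[i f]|g] _ /=.
    rewrite /h' /h /= !ffunE /ocons unlift_none; congr pair.
    by apply/ffunP => y; rewrite !ffunE liftK.
  apply/ffunP => x; rewrite /h /h' !ffunE /ocons.
  by case: unliftP => [y ->|->]; rewrite ?ffunE.
by apply: eq_bigr => -[i f] _.
Qed.

Fixpoint TS (T : Type) (s : seq T) (n : nat) (H : seq T -> C) : C :=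
  match n with
  | 0 => H [::]
  | n'.+1 => \sum_(x <- s) TS s n' (fun u => H (x :: u))
  end.

Lemma TS_map (T U : Type) (g : T -> U) (s : seq T) n (H : seq U -> C) :
  TS (map g s) n H = TS s n (fun u => H (map g u)).
Proof.
elim: n H => [//|n IH] H /=; rewrite big_map; apply: eq_bigr => x _.
by rewrite IH.
Qed.

Lemma TS_ffun (I : finType) n (H : seq I -> C) :
  \sum_(f : {ffun 'I_n -> I}) H (map f (enum 'I_n)) = TS (enum I) n H.
Proof.
elim: n H => [|n IH] H /=.
  have f0 : {ffun 'I_0 -> I} by apply: finfun; case=> m hm; exfalso; rewrite ltn0 in hm.
  rewrite (big_pred1 f0); first by rewrite enum_ord0.
  by move=> f; apply/esym/eqP/ffunP => -[m hm]; exfalso; rewrite ltn0 in hm.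
rewrite sum_ffunS big_enum /=; apply: eq_bigr => i _.
rewrite -IH; apply: eq_bigr => f _; congr H.
rewrite enum_ordSl /= ffunE /ocons unlift_none -map_comp; congr cons.
by apply: eq_map => y /=; rewrite ffunE liftK.
Qed.

Lemma TS_nth (T : Type) (x0 : T) (s : seq T) n (H : seq T -> C) :
  \sum_(f : {ffun 'I_n -> 'I_(size s)}) H (map (fun x => nth x0 s (f x)) (enum 'I_n))
  = TS s n H.
Proof.
have -> : \sum_(f : {ffun 'I_n -> 'I_(size s)}) H (map (fun x => nth x0 s (f x)) (enum 'I_n))
   = \sum_(f : {ffun 'I_n -> 'I_(size s)}) (fun u => H (map (fun i : 'I_(size s) => nth x0 s i) u)) (map f (enum 'I_n)).
  by apply: eq_bigr => f _ /=; rewrite -map_comp.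
rewrite (@TS_ffun _ n (fun u => H (map (fun i : 'I_(size s) => nth x0 s i) u))).
rewrite -(TS_map (fun i : 'I_(size s) => nth x0 s i)).
have -> : map (fun i : 'I_(size s) => nth x0 s i) (enum 'I_(size s)) = s.
  by rewrite (map_comp (nth x0 s) val) val_enum_ord -/(mkseq _ _) mkseq_nth.
by [].
Qed.

Lemma TS0 (T : Type) (s : seq T) n (H : seq T -> C) :
  (forall u, H u = 0) -> TS s n H = 0.
Proof.
elim: n H => [|n IH] H H0 /=; first exact: H0.
by rewrite big1 // => x _; apply: IH.
Qed.

Lemma TS_indep (T : eqType) (good : pred T) (s s' : seq T) n (H : seq T -> C) :
  uniq s -> uniq s' -> (forall x, good x -> x \in s) -> (forall x, good x -> x \in s') ->
  (forall u, ~~ all good u -> H u = 0) ->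
  TS s n H = TS s' n H.
Proof.
move=> us us' gs gs'.
elim: n H => [|n IH] H H0 //=.
transitivity (\sum_(x <- s) TS s' n (fun u => H (x :: u))).
  apply: eq_bigr => x _; apply: IH => u hu; apply: H0 => /=.
  by rewrite negb_and hu orbT.
rewrite (bigID good) /= [X in _ + X]big1 ?addr0; last first.
  move=> x gx; apply: TS0 => u; apply: H0 => /=; by rewrite (negbTE gx).
rewrite [RHS](bigID good) /= [X in _ + X]big1 ?addr0; last first.
  move=> x gx; apply: TS0 => u; apply: H0 => /=; by rewrite (negbTE gx).
have hp : perm_eq [seq x <- s | good x] [seq x <- s' | good x].
  apply: uniq_perm; rewrite ?filter_uniq //.
  move=> x; rewrite !mem_filter; case gx: (good x) => //=.
  by rewrite gs ?gs'.
by rewrite -[LHS]big_filter -[RHS]big_filter (perm_big _ hp).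
Qed.

End Generic.
Section Geo.
Variable R : realType.
Local Notation pt := (pt R).

Lemma I2_cases (i : 'I_2) : i = 0 \/ i = 1.
Proof. by case: i => [[|[|//]] ?]; [left|right]; apply: val_inj. Qed.

Lemma sum2 (F : 'I_2 -> R) : \sum_(j < 2) F j = F 0 + F 1.
Proof.
rewrite big_ord_recl big_ord1; congr (F _ + F _); exact: val_inj.
Qed.

Lemma mxappM (A B : 'M[R]_2) (k : pt) : mxapp (A *m B) k = mxapp A (mxapp B k).
Proof. rewrite /mxapp !mxE !sum2 /=; congr pair; ring. Qed.

Lemma mxapp1 (k : pt) : mxapp (1%:M : 'M[R]_2) k = k.
Proof. by case: k => x y; rewrite /mxapp !mxE /= mul1r mul0r mul0r mul1r addr0 add0r. Qed.

Lemma mxappN (g : 'M[R]_2) (k : pt) : mxapp g (ptN k) = ptN (mxapp g k).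
Proof. rewrite /mxapp /ptN /=; congr pair; ring. Qed.

Lemma orth_entries (g : 'M[R]_2) : orthogonal2 g ->
  [/\ g 0 0 ^+ 2 + g 1 0 ^+ 2 = 1, g 0 1 ^+ 2 + g 1 1 ^+ 2 = 1 &
      g 0 0 * g 0 1 + g 1 0 * g 1 1 = 0].
Proof.
move=> h; have e i j : (g^T *m g) i j = (1%:M : 'M[R]_2) i j by rewrite h.
move: (e 0 0) (e 1 1) (e 0 1); rewrite !mxE !sum2 !mxE /= => -> -> ->.
by split; rewrite ?expr2 //.
Qed.

Lemma orth_inv (g : 'M[R]_2) : orthogonal2 g -> invmx g = g^T.
Proof.
move=> h; have h' := mulmx1C h.
have [gu _] := mulmx1_unit h'.
by rewrite -[invmx g]mulmx1 -h' mulmxA mulVmx // mul1mx.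
Qed.

Lemma orth_invK (g : 'M[R]_2) (k : pt) : orthogonal2 g ->
  mxapp (invmx g) (mxapp g k) = k.
Proof. by move=> h; rewrite -mxappM orth_inv // h mxapp1. Qed.

Lemma orth_Kinv (g : 'M[R]_2) (k : pt) : orthogonal2 g ->
  mxapp g (mxapp (invmx g) k) = k.
Proof. by move=> h; rewrite -mxappM orth_inv // (mulmx1C h) mxapp1. Qed.

Lemma orth_invO (g : 'M[R]_2) : orthogonal2 g -> orthogonal2 (invmx g).
Proof. by move=> h; rewrite /orthogonal2 orth_inv // trmxK (mulmx1C h). Qed.

Lemma orth_inj (g : 'M[R]_2) : orthogonal2 g -> injective (mxapp g).
Proof. by move=> h k k' e; rewrite -(orth_invK k h) e orth_invK. Qed.

Lemma orth_circle (g : 'M[R]_2) kap2 (k : pt) : orthogonal2 g ->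
  onCircle kap2 (mxapp g k) = onCircle kap2 k.
Proof.
move=> /orth_entries [h1 h2 h3]; rewrite /onCircle /mxapp /=.
have -> : (g 0 0 * k.1 + g 0 1 * k.2) ^+ 2 + (g 1 0 * k.1 + g 1 1 * k.2) ^+ 2
  = (g 0 0 ^+ 2 + g 1 0 ^+ 2) * k.1 ^+ 2 + (g 0 1 ^+ 2 + g 1 1 ^+ 2) * k.2 ^+ 2
    + 2 * (g 0 0 * g 0 1 + g 1 0 * g 1 1) * k.1 * k.2 by ring.
by rewrite h1 h2 h3 mulr0 !mul0r !mul1r addr0.
Qed.

Lemma rotE (th : R) (k : pt) :
  mxapp (rotmx th) k = (cos th * k.1 - sin th * k.2, sin th * k.1 + cos th * k.2).
Proof. by rewrite /mxapp !mxE /=; congr pair; ring. Qed.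

Lemma gamma1E (k : pt) : mxapp (gamma1 R) k = (- k.1, k.2).
Proof. by rewrite /mxapp !mxE /=; congr pair; ring. Qed.

Lemma orth_entrywise (g : 'M[R]_2) : (forall i j, (g^T *m g) i j = (1%:M : 'M[R]_2) i j) ->
  orthogonal2 g.
Proof. by move=> h; apply/matrixP => i j; rewrite h. Qed.

Lemma rot_orth (th : R) : orthogonal2 (rotmx th).
Proof.
apply: orth_entrywise => i j.
have cs := cos2Dsin2 th.
by case: (I2_cases i) => ->; case: (I2_cases j) => ->; rewrite !mxE !sum2 !mxE /=;
  rewrite -cs; ring.
Qed.

Lemma gamma1_orth : orthogonal2 (gamma1 R).
Proof.
apply: orth_entrywise => i j.
by case: (I2_cases i) => ->; case: (I2_cases j) => ->; rewrite !mxE !sum2 !mxE /=; ring.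
Qed.

Lemma angle (a b : R) : a ^+ 2 + b ^+ 2 = 1 -> exists th : R, cos th = a /\ sin th = b.
Proof.
move=> h.
have ha : -1 <= a <= 1 by apply/andP; split; nra.
have ca : cos (acos a) = a by case: (acos_def ha).
have sa : sin (acos a) = `|b|.
  by rewrite sin_acos // -sqrtr_sqr; congr Num.sqrt; rewrite -h; ring.
case: (lerP 0 b) => hb.
  by exists (acos a); rewrite ca sa ger0_norm.
exists (- acos a); rewrite cosN sinN ca sa ltr0_norm //; split => //; ring.
Qed.

Lemma orth_decomp (g : 'M[R]_2) : orthogonal2 g -> exists th,
  (forall k, mxapp g k = mxapp (rotmx th) k) \/
  (forall k, mxapp g k = mxapp (rotmx th) (mxapp (gamma1 R) k)).
Proof.
move=> /orth_entries [h1 h2 h3].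
set a := g 0 0 in h1 h3 *; set c := g 1 0 in h1 h3 *;
set b := g 0 1 in h2 h3 *; set d := g 1 1 in h2 h3 *.
set l := a * d - b * c.
have eb : b = - c * l.
  have : b + c * l = b * (1 - (a ^+ 2 + c ^+ 2)) + a * (a * b + c * d) by rewrite /l; ring.
  by rewrite h1 h3 subrr mulr0 mulr0 addr0 => /eqP; rewrite addr_eq0 => /eqP ->; ring.
have ed : d = a * l.
  have : d - a * l = d * (1 - (a ^+ 2 + c ^+ 2)) + c * (a * b + c * d) by rewrite /l; ring.
  by rewrite h1 h3 subrr mulr0 mulr0 addr0 => /eqP; rewrite subr_eq0 => /eqP.
have l2 : l ^+ 2 = 1.
  move: h2; rewrite eb ed => <-.
  transitivity (l ^+ 2 * (a ^+ 2 + c ^+ 2)); first by rewrite h1 mulr1.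
  ring.
have [th [ct st]] := angle h1.
have [ct' st'] : cos (th + pi) = - a /\ sin (th + pi) = - c.
  by rewrite cosD sinD cospi sinpi ct st; split; ring.
move/eqP: l2; rewrite sqrf_eq1 => /orP [] /eqP el.
  exists th; left => k; rewrite rotE /mxapp -/a -/b -/c -/d ed eb el ct st; congr pair; ring.
exists (th + pi); right => k; rewrite rotE gamma1E /mxapp -/a -/b -/c -/d ed eb el ct' st' /=.
congr pair; ring.
Qed.

End Geo.
Section At.
Variable R : realType.
Variables l1 n1 l2 n2 : nat.
Hypotheses (hl : (l2 < l1)%N) (hn1 : (0 < n1 < l1)%N) (hn2 : (0 < n2 < l2)%N)
  (hk : (l1 ^ 2 + n1 ^ 2 = l2 ^ 2 + n2 ^ 2)%N).
Local Notation pt := (pt R).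
Local Notation wv := (wv R l1 n1 l2 n2).
Local Notation inAt := (@inAt R l1 n1 l2 n2).
Local Notation emb := (@embEc R l1 n1 l2 n2).
Local Notation crd := (@coordEc R l1 n1 l2 n2).
Local Notation kap2 := ((l1 ^ 2 + n1 ^ 2)%N%:R : R).

Definition ipt (i : 'I_8) : int * int :=
  match val i with
  | 0 => (Posz l1, Posz n1) | 1 => (Posz l1, - Posz n1) | 2 => (Posz n1, Posz l1)
  | 3 => (Posz n1, - Posz l1) | 4 => (Posz l2, Posz n2) | 5 => (Posz l2, - Posz n2)
  | 6 => (Posz n2, Posz l2) | _ => (Posz n2, - Posz l2) end.

Lemma wv_ipt i : wv i = ((ipt i).1%:~R, (ipt i).2%:~R).
Proof. by case: i => [[|[|[|[|[|[|[|[|//]]]]]]]] hi]; rewrite /wv /ipt /= ?intrN. Qed.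

Lemma ipt_inj : injective ipt.
Proof.
move=> [[|[|[|[|[|[|[|[|//]]]]]]]] hi] [[|[|[|[|[|[|[|[|//]]]]]]]] hj] /= e;
  apply: val_inj => //=; move: e; rewrite /ipt /= => -[]; lia.
Qed.

Lemma ipt_pos i : (0 < (ipt i).1)%R.
Proof. case: i => [[|[|[|[|[|[|[|[|//]]]]]]]] hi]; rewrite /ipt /=; lia. Qed.

Lemma ipt_circ i : ((ipt i).1 ^+ 2 + (ipt i).2 ^+ 2)%R = Posz (l1 ^ 2 + n1 ^ 2).
Proof. case: i => [[|[|[|[|[|[|[|[|//]]]]]]]] hi]; rewrite /ipt /=; nia. Qed.

Lemma wv_inj : injective wv.
Proof.
move=> i j; rewrite !wv_ipt => -[/intr_inj e1 /intr_inj e2]; apply: ipt_inj.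
by move: e1 e2; case: (ipt i) => ? ?; case: (ipt j) => ? ? /= -> ->.
Qed.

Lemma wv_neqN i j : wv i != ptN (wv j).
Proof.
apply/eqP; rewrite !wv_ipt /ptN /= => -[e1 _].
move: e1; rewrite -intrN => /intr_inj e1.
have := ipt_pos i; have := ipt_pos j; rewrite e1; lia.
Qed.

Lemma ptNK (k : pt) : ptN (ptN k) = k.
Proof. by case: k => x y; rewrite /ptN /= !opprK. Qed.

Lemma ptN_inj : injective (@ptN R).
Proof. by move=> k k' e; rewrite -(ptNK k) e ptNK. Qed.

Lemma onCircleN kap (k : pt) : onCircle kap (ptN k) = onCircle kap k.
Proof. by rewrite /onCircle /ptN /= !sqrrN. Qed.

Lemma onCircle_wv i : onCircle kap2 (wv i).
Proof.
rewrite wv_ipt /onCircle /= -!rmorphXn -rmorphD /= ipt_circ.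
by [].
Qed.

Definition ptA (i : 'I_16) : pt :=
  if (i < 8)%N then wv (inord i) else ptN (wv (inord (i - 8))).

Lemma ptA_inj : injective ptA.
Proof.
move=> i j; rewrite /ptA.
have li := ltn_ord i; have lj := ltn_ord j.
case: ifP => hi; case: ifP => hj.
- move/wv_inj => /(congr1 val); rewrite /= !inordK ?hi ?hj // => e; exact: val_inj.
- by move=> e; move: (wv_neqN (inord i) (inord (j - 8))); rewrite e eqxx.
- by move=> e; move: (wv_neqN (inord j) (inord (i - 8))); rewrite e eqxx.
- have hi' : (i - 8 < 8)%N by lia.
  have hj' : (j - 8 < 8)%N by lia.
  move/ptN_inj/wv_inj => /(congr1 val); rewrite /= !inordK // => e.
  apply: val_inj => /=; lia.
Qed.

Lemma inAtP (k : pt) : reflect (exists i, k = ptA i) (inAt k).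
Proof.
apply: (iffP existsP) => [[i /orP[] /eqP ->]|[i ->]].
- have li := ltn_ord i.
  exists (inord i); rewrite /ptA inordK; last by lia.
  rewrite li; congr wv; apply: val_inj; by rewrite /= inordK.
- exists (inord (i + 8)); rewrite /ptA inordK; last by have := ltn_ord i; lia.
  rewrite (_ : (i + 8 < 8)%N = false); last by lia.
  by congr (ptN (wv _)); apply: val_inj; rewrite /= inordK addnK; last by have := ltn_ord i; lia.
- rewrite /ptA; case: ifP => _.
    by exists (inord i); rewrite eqxx.
  by exists (inord (i - 8)); rewrite eqxx orbT.
Qed.

Lemma inAt_circ (k : pt) : inAt k -> onCircle kap2 k.
Proof.
by case/inAtP => i ->; rewrite /ptA; case: ifP => _; rewrite ?onCircleN onCircle_wv.
Qed.

Lemma ptA_circ i : onCircle kap2 (ptA i).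
Proof. by apply: inAt_circ; apply/inAtP; exists i. Qed.

Lemma inAtN (k : pt) : inAt (ptN k) = inAt k.
Proof.
suff h : forall k, inAt k -> inAt (ptN k).
  by apply/idP/idP => /h //; rewrite ptNK.
move=> {}k /existsP [i /orP[] /eqP ->]; apply/existsP; exists i.
  by rewrite eqxx orbT.
by rewrite ptNK eqxx.
Qed.

Definition partner (i : 'I_8) : 'I_8 := inord (if odd i then i.-1 else i.+1).

Lemma wv_g1 i : mxapp (gamma1 R) (wv i) = ptN (wv (partner i)).
Proof.
rewrite gamma1E /partner /ptN.
case: i => [[|[|[|[|[|[|[|[|//]]]]]]]] hi]; rewrite /wv /= inordK //= ?opprK //.
Qed.

Lemma inAt_g1 (k : pt) : inAt k -> inAt (mxapp (gamma1 R) k).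
Proof.
move=> /existsP [i /orP[] /eqP ->]; apply/existsP; exists (partner i).
  by rewrite wv_g1 eqxx orbT.
by rewrite mxappN wv_g1 ptNK eqxx.
Qed.

Lemma emb_wv z j : emb z (wv j) = z 0 j.
Proof.
rewrite /embEc (bigD1 j) //= eqxx (negbTE (wv_neqN _ _)) mul1r mul0r addr0.
rewrite big1 ?addr0 // => i hij.
rewrite (negbTE (wv_neqN _ _)) mul0r addr0.
case: eqP => [/wv_inj e|_]; last by rewrite mul0r.
by rewrite e eqxx in hij.
Qed.

Lemma emb_wvN z j : emb z (ptN (wv j)) = conjc (z 0 j).
Proof.
rewrite /embEc (bigD1 j) //= eqxx.
have -> : (ptN (wv j) == wv j) = false by apply/negbTE; rewrite eq_sym wv_neqN.
rewrite mul1r mul0r add0r.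
rewrite big1 ?addr0 // => i hij.
have -> : (ptN (wv j) == wv i) = false by apply/negbTE; rewrite eq_sym wv_neqN.
case: eqP => [/ptN_inj/wv_inj e|_]; last by rewrite !mul0r addr0.
by rewrite e eqxx in hij.
Qed.

Lemma emb_out z (k : pt) : ~~ inAt k -> emb z k = 0.
Proof.
move=> h; rewrite /embEc big1 // => i _.
have -> : (k == wv i) = false by apply: contraNF h => /eqP ->; apply/existsP; exists i; rewrite eqxx.
have -> : (k == ptN (wv i)) = false.
  by apply: contraNF h => /eqP ->; apply/existsP; exists i; rewrite eqxx orbT.
by rewrite !mul0r addr0.
Qed.

Lemma emb_cases (P : pt -> Prop) :
  (forall j, P (wv j)) -> (forall j, P (ptN (wv j))) -> (forall k, ~~ inAt k -> P k) ->
  forall k, P k.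
Proof.
move=> h1 h2 h3 k; case hk': (inAt k); last by apply: h3; rewrite hk'.
by move/existsP: hk' => [i /orP[] /eqP ->].
Qed.

Lemma emb_inEc z : inEc l1 n1 l2 n2 (emb z).
Proof.
split.
  by move=> k; apply: contraR => /emb_out ->.
apply: emb_cases => [j|j|k hk'].
- by rewrite emb_wv emb_wvN.
- by rewrite ptNK emb_wv emb_wvN conjcK.
- by rewrite !emb_out ?inAtN // rmorph0.
Qed.

Lemma crd_emb z : crd (emb z) = z.
Proof.
apply/matrixP => i j; rewrite mxE emb_wv; congr (z _ j).
by case: i => [[|//] ?]; apply: val_inj.
Qed.

Lemma emb_crd (Psi : efield R) : inEc l1 n1 l2 n2 Psi -> emb (crd Psi) = Psi.
Proof.
move=> [hs hc]; apply: funext; apply: emb_cases => [j|j|k hk'].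
- by rewrite emb_wv mxE.
- by rewrite emb_wvN mxE hc.
- rewrite emb_out //; apply/esym/eqP; apply: contraR hk'; exact: hs.
Qed.

Lemma inEc_act (g : 'M[R]_2) (Psi : efield R) : orthogonal2 g ->
  (forall x, inAt x -> inAt (mxapp g x)) -> inEc l1 n1 l2 n2 Psi ->
  inEc l1 n1 l2 n2 (actO g Psi).
Proof.
move=> og hg [hs hc]; split.
  by move=> k /hs /hg; rewrite orth_Kinv.
by move=> k; rewrite /actO mxappN hc.
Qed.

Lemma inEc_ext (a b : efield R) : (forall k, a k = b k) -> inEc l1 n1 l2 n2 a -> inEc l1 n1 l2 n2 b.
Proof. by move=> e; have -> : a = b by apply: funext. Qed.

End At.
Section Core.
Variable R : realType.
Local Notation C := (R[i]).
Local Notation pt := (pt R).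
Variable p : nat.

Definition om (w : 'I_4) : C := ('i%C : C) ^+ w.

Lemma i4 : ('i%C : C) ^+ 4 = 1.
Proof. by rewrite (_ : 4%N = (2 * 2)%N) // exprM sqr_i sqrrN expr1n. Qed.

Lemma conjI : conjc ('i%C : C) = - 'i%C.
Proof. by apply/eqP; rewrite eq_complex /= oppr0 !eqxx. Qed.

Lemma i3 : ('i%C : C) ^+ 3 = - 'i%C.
Proof. by rewrite exprS sqr_i mulrN1. Qed.

Lemma conjcM (x y : C) : conjc (x * y) = conjc x * conjc y.
Proof. exact: rmorphM. Qed.

Lemma conjX n : conjc (('i%C : C) ^+ n) = (('i%C : C) ^+ n) ^+ 3.
Proof.
elim: n => [|n IH]; first by rewrite !expr0 expr1n; apply/eqP; rewrite eq_complex /= oppr0 !eqxx.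
by rewrite exprS conjcM IH conjI exprMn i3.
Qed.

Lemma conj_om w : conjc (om w) = om w ^+ 3.
Proof. exact: conjX. Qed.

Lemma s4 (x : C) : \sum_(w < 4) x ^+ w = 1 + x + x ^+ 2 + x ^+ 3.
Proof. by rewrite !big_ord_recr big_ord0 /= add0r expr0 expr1. Qed.
Lemma sum_om (E : nat) : \sum_(w < 4) om w ^+ E = if (4 %| E)%N then 4 else 0.
Proof.
have e w : om w ^+ E = (('i%C : C) ^+ (E %% 4)) ^+ w.
  have hE := divn_eq E 4; set q := (E %/ 4)%N in hE; set r := (E %% 4)%N in hE *.
  rewrite /om -!exprM hE mulnDr exprD mulnA (mulnC _ 4) exprM i4 expr1n mul1r mulnC.
  by [].
under eq_bigr do rewrite e.
rewrite s4 /dvdn; have : (E %% 4 < 4)%N by rewrite ltn_mod.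
have h := sqr_i R.
have h3 := i3.
case: (E %% 4)%N => [|[|[|[|//]]]] _ /=.
- rewrite expr0 expr1n; ring.
- rewrite expr1 h h3; ring.
- rewrite h; ring.
- have e6 : ('i%C : C) ^+ (3 * 2) = -1 by rewrite (_ : (3 * 2 = 4 + 2)%N) // exprD i4 mul1r h.
  have e9 : ('i%C : C) ^+ (3 * 3) = 'i%C by rewrite (_ : (3 * 3 = 4 + 4 + 1)%N) // !exprD i4 !mul1r expr1.
  rewrite -!exprM e6 e9 h3; ring.
Qed.

Definition PhiT (t : p.-tuple pt) (xi : 'I_p -> C) : efield R :=
  fun k => \sum_(x < p) ((k == tnth t x)%:R * xi x + (k == ptN (tnth t x))%:R * conjc (xi x)).

Definition eb (b : bool) : nat := if b then 3 else 1.

Definition Bf (t : p.-tuple pt) (beta : 'I_p -> C) (k : pt) (j : 'I_p * bool) : C :=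
  if j.2 then (k == ptN (tnth t j.1))%:R * conjc (beta j.1) else (k == tnth t j.1)%:R * beta j.1.

Lemma PhiT_expand t beta (w : 'I_p -> 'I_4) k :
  PhiT t (fun x => om (w x) * beta x) k =
  \sum_(j : 'I_p * bool) Bf t beta k j * om (w j.1) ^+ (eb j.2).
Proof.
rewrite /PhiT; symmetry.
rewrite (eq_bigr (fun j => (fun x b => Bf t beta k (x, b) * om (w x) ^+ eb b) j.1 j.2)); last by case.
rewrite -(pair_bigA _ (fun x b => Bf t beta k (x, b) * om (w x) ^+ eb b)) /=; apply: eq_bigr => x _.
rewrite big_bool /Bf /eb /= expr1 addrC conjcM conj_om; ring.
Qed.

Definition cnt (h : {ffun 'I_p -> 'I_p * bool}) (x : 'I_p) : nat :=
  (\sum_(y < p | (h y).1 == x) eb (h y).2)%N.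

Lemma prod_regroup (h : {ffun 'I_p -> 'I_p * bool}) (w : 'I_p -> 'I_4) :
  \prod_(y < p) om (w (h y).1) ^+ eb (h y).2 = \prod_(x < p) om (w x) ^+ cnt h x.
Proof.
rewrite (partition_big (fun y => (h y).1) xpredT) //=.
apply: eq_bigr => x _; rewrite /cnt -prodrXr.
by apply: eq_bigr => y /eqP ->.
Qed.

Lemma prod_if (P : pred 'I_p) (c : C) :
  \prod_(x < p) (if P x then c else 0) = if [forall x, P x] then c ^+ p else 0.
Proof.
case: ifP => [/forallP hP|/negbT].
  by rewrite (eq_bigr (fun _ => c)) ?prodr_const ?card_ord // => x _; rewrite hP.
rewrite negb_forall => /existsP [x hx].
by rewrite (bigD1 x) //= (negbTE hx) mul0r.
Qed.

Definition condh (h : {ffun 'I_p -> 'I_p * bool}) : bool :=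
  [forall x, (4 %| 3 + cnt h x)%N].

Lemma surj_inj (f : 'I_p -> 'I_p) : (forall x, exists y, f y = x) -> injective f.
Proof.
move=> hs.
pose g x := odflt x [pick y | f y == x].
have fg x : f (g x) = x.
  rewrite /g; case: pickP => [y /eqP //|h0].
  by have [y hy] := hs x; move: (h0 y); rewrite hy eqxx.
have gi : injective g by apply: (can_inj fg).
have [g' gg' g'g] := injF_bij gi.
have fg' x : f x = g' x by rewrite -{1}(g'g x) fg.
by move=> a b; rewrite !fg'; apply: (can_inj g'g).
Qed.

Lemma condhP h : condh h = injectiveb (fun y => (h y).1) && [forall y, ~~ (h y).2].
Proof.
apply/idP/idP.
- move/forallP => hc.
  have hs : forall x, exists y, (h y).1 = x.
    move=> x; case: (pickP (fun y => (h y).1 == x)) => [y /eqP hy|hn]; first by exists y.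
    by move: (hc x); rewrite /cnt big_pred0.
  have hi := surj_inj hs.
  apply/andP; split; first by apply/injectiveP.
  apply/forallP => y; move: (hc (h y).1); rewrite /cnt (big_pred1 y).
    by case: (h y).2.
  by move=> y'; apply/eqP/eqP => [/hi //|-> //].
- case/andP => /injectiveP hi /forallP hb; apply/forallP => x.
  have [y0 hy0] : exists y, (h y).1 = x.
    have := injF_onto hi x => /codomP [y ->]; by exists y.
  rewrite /cnt (big_pred1 y0).
    by move: (hb y0); case: (h y0).2.
  by move=> y'; apply/eqP/eqP => [e|-> //]; apply: hi; rewrite e hy0.
Qed.

Definition hg (g : {ffun 'I_p -> 'I_p}) : {ffun 'I_p -> 'I_p * bool} := [ffun y => (g y, false)].

Lemma closed1 (a : 'I_p -> pt) (t : p.-tuple pt) (beta : 'I_p -> C) :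
  \sum_(w : {ffun 'I_p -> 'I_4}) (\prod_(x < p) om (w x) ^+ 3) *
     \prod_(y < p) PhiT t (fun x => om (w x) * beta x) (a y)
  = 4 ^+ p * (\prod_(x < p) beta x) *
    \sum_(g : {ffun 'I_p -> 'I_p} | injectiveb g) \prod_(y < p) (a y == tnth t (g y))%:R.
Proof.
under eq_bigr => w _ do rewrite (eq_bigr _ (fun y _ => PhiT_expand t beta w (a y))).
under eq_bigr do rewrite bigA_distr_bigA /= mulr_sumr.
rewrite exchange_big /=.
transitivity (\sum_(h : {ffun 'I_p -> 'I_p * bool})
   (\prod_(y < p) Bf t beta (a y) (h y)) * (if condh h then 4 ^+ p else 0)).
  apply: eq_bigr => h _.
  transitivity (\sum_(w : {ffun 'I_p -> 'I_4}) (\prod_(y < p) Bf t beta (a y) (h y)) *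
       \prod_(x < p) om (w x) ^+ (3 + cnt h x)).
    apply: eq_bigr => w _; rewrite [X in _ * X]big_split /= prod_regroup mulrCA.
    congr (_ * _).
    by rewrite -big_split /=; apply: eq_bigr => x _; rewrite exprD.
  rewrite -mulr_sumr; congr (_ * _).
  rewrite -(bigA_distr_bigA (fun x u => om u ^+ (3 + cnt h x))) /=.
  under eq_bigr do rewrite sum_om.
  by rewrite prod_if.
rewrite (eq_bigr (fun h => if condh h then (\prod_(y < p) Bf t beta (a y) (h y)) * 4 ^+ p else 0));
  last by move=> h _; case: ifP; rewrite ?mulr0.
rewrite -big_mkcond /=.
rewrite (reindex_onto hg (fun h => [ffun y => (h y).1])) /=; last first.
  move=> h; rewrite condhP => /andP [_ /forallP hb].
  apply/ffunP => y; rewrite !ffunE; move: (hb y); case: (h y) => ? [] //.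
rewrite mulr_sumr; apply: eq_big => [g|g].
  rewrite condhP.
  have -> : [forall y, ~~ (hg g y).2] by apply/forallP => y; rewrite ffunE.
  have -> : [ffun y => (hg g y).1] == g by apply/eqP/ffunP => y; rewrite !ffunE.
  rewrite andbT !andbT; apply: eq_injectiveb => y; by rewrite ffunE.
move=> hi; rewrite mulrC -mulrA; congr (_ * _).
rewrite /Bf.
under eq_bigr do rewrite ffunE /=.
rewrite big_split /= mulrC; congr (_ * _).
have gi : injective g.
  move: hi; rewrite condhP => /andP [/andP [/injectiveP hi1 _] _] x y e.
  by apply: hi1; rewrite /= !ffunE /= e.
by rewrite [RHS](reindex_inj gi).
Qed.

End Core.
Section Repr.
Variable R : realType.
Local Notation C := (R[i]).
Local Notation pt := (pt R).
Variables l1 n1 l2 n2 p : nat.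
Hypotheses (hl : (l2 < l1)%N) (hn1 : (0 < n1 < l1)%N) (hn2 : (0 < n2 < l2)%N)
  (hk : (l1 ^ 2 + n1 ^ 2 = l2 ^ 2 + n2 ^ 2)%N).
Variable Ft : 'rV[C]_8 -> 'rV[C]_8.
Hypothesis hpoly : homogPoly p Ft.
Local Notation wv := (wv R l1 n1 l2 n2).
Local Notation inAt := (@inAt R l1 n1 l2 n2).
Local Notation emb := (@embEc R l1 n1 l2 n2).
Local Notation crd := (@coordEc R l1 n1 l2 n2).
Local Notation inEc := (@inEc R l1 n1 l2 n2).
Local Notation ptA := (ptA R l1 n1 l2 n2).
Local Notation inAtP_ := (inAtP hl hn1 hn2 hk).
Local Notation ptA_inj_ := (ptA_inj hl hn1 hn2 hk).
Local Notation emb_wv_ := (emb_wv hl hn1 hn2 hk).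
Local Notation emb_wvN_ := (emb_wvN hl hn1 hn2 hk).
Local Notation inAt_circ_ := (inAt_circ hl hn1 hn2 hk).
Local Notation emb_inEc_ := (emb_inEc hl hn1 hn2 hk).
Local Notation emb_crd_ := (emb_crd hl hn1 hn2 hk).
Local Notation crd_emb_ := (crd_emb hl hn1 hn2 hk).
Local Notation ptA_circ_ := (ptA_circ R hl hn1 hn2 hk).

Definition Gk (k : pt) (Psi : efield R) : C := emb (Ft (crd Psi)) k.

Definition lst (m : {ffun 'I_16 -> 'I_p.+1}) : seq 'I_16 :=
  flatten [seq nseq (m i) i | i <- enum 'I_16].
Definition fm (m : {ffun 'I_16 -> 'I_p.+1}) : {ffun 'I_p -> 'I_16} :=
  [ffun y : 'I_p => nth ord0 (lst m) y].

Lemma size_lst (m : {ffun 'I_16 -> 'I_p.+1}) : size (lst m) = (\sum_(i < 16) (m i : nat))%N.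
Proof.
rewrite /lst size_flatten /shape -map_comp sumnE big_map big_enum /=.
by apply: eq_bigr => i _; rewrite size_nseq.
Qed.

Lemma iter_mulE (a : C) n : iter n ( *%R a) 1 = a ^+ n.
Proof. by elim: n => [|n IH] //=; rewrite IH exprS. Qed.

Lemma prod_lst (m : {ffun 'I_16 -> 'I_p.+1}) (Y : 'I_16 -> C) : \prod_(i <- lst m) Y i = \prod_(i < 16) Y i ^+ m i.
Proof.
rewrite /lst big_flatten big_map big_enum /=; apply: eq_bigr => i _.
by rewrite big_nseq iter_mulE.
Qed.

Lemma prod_fm (m : {ffun 'I_16 -> 'I_p.+1}) (Y : 'I_16 -> C) : (\sum_(i < 16) (m i : nat))%N = p ->
  \prod_(y < p) Y (fm m y) = \prod_(i < 16) Y i ^+ m i.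
Proof.
move=> hs; rewrite -prod_lst (big_nth ord0) size_lst hs big_mkord.
by apply: eq_bigr => y _; rewrite ffunE.
Qed.

Lemma poly_ordered (c' : {ffun 'I_16 -> 'I_p.+1} -> C) (Y : 'I_16 -> C) :
  \sum_(m : {ffun 'I_16 -> 'I_p.+1} | (\sum_(i < 16) (m i : nat))%N == p) c' m * \prod_(i < 16) Y i ^+ (m i)
  = \sum_(f : {ffun 'I_p -> 'I_16})
      (\sum_(m : {ffun 'I_16 -> 'I_p.+1} | ((\sum_(i < 16) (m i : nat))%N == p) && (fm m == f)) c' m) *
      \prod_(y < p) Y (f y).
Proof.
rewrite (partition_big fm xpredT) //=; apply: eq_bigr => f _.
rewrite mulr_suml; apply: eq_bigr => m /andP [/eqP hs /eqP <-].
by rewrite prod_fm.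
Qed.

Lemma ptA_inAt i : inAt (ptA i).
Proof. by apply/inAtP_; exists i. Qed.

Lemma repr_ex (k : pt) : exists qd : ('I_16 -> pt) * ({ffun 'I_p -> 'I_16} -> C),
  [/\ injective qd.1, (forall i, inAt (qd.1 i)), (forall x, inAt x -> exists i, qd.1 i = x) &
      forall Psi, inEc Psi -> Gk k Psi = \sum_(f : {ffun 'I_p -> 'I_16}) qd.2 f * \prod_(y < p) Psi (qd.1 (f y))].
Proof.
have [c hc] := hpoly.
pose dd (j : 'I_8) (f : {ffun 'I_p -> 'I_16}) :=
  \sum_(m : {ffun 'I_16 -> 'I_p.+1} | ((\sum_(i < 16) (m i : nat))%N == p) && (fm m == f)) c j m.
have Ftform : forall Psi, inEc Psi -> forall j,
    Ft (crd Psi) 0 j = \sum_(f : {ffun 'I_p -> 'I_16}) dd j f * \prod_(y < p) Psi (ptA (f y)).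
  move=> Psi [hs hsym] j; rewrite hc /dd -(poly_ordered (c j) (fun i => Psi (ptA i))); apply: eq_bigr => m _.
  congr (_ * _); apply: eq_bigr => i _; congr (_ ^+ _).
  rewrite /ptA; case: ifP => _; rewrite !mxE ?hsym //.
have cov : forall x, inAt x -> exists i, ptA i = x by move=> x /inAtP_ [i ->]; exists i.
case hk': (inAt k); last first.
  exists (ptA, fun _ => 0); split => /=.
  - exact: ptA_inj_.
  - exact: ptA_inAt.
  - exact: cov.
  move=> Psi _; rewrite /Gk emb_out ?hk' // big1 // => f _; by rewrite mul0r.
case/existsP: hk' => i /orP [] /eqP ->.
  exists (ptA, dd i); split => /=.
  - exact: ptA_inj_.
  - exact: ptA_inAt.
  - exact: cov.
  by move=> Psi hP; rewrite /Gk emb_wv_ // Ftform.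
exists (fun j => ptN (ptA j), fun f => conjc (dd i f)); split => /=.
- by move=> a b /ptN_inj /ptA_inj_.
- by move=> j; rewrite inAtN // ptA_inAt.
- move=> x hx; rewrite -inAtN // in hx; have [j hj] := cov _ hx.
  by exists j; rewrite hj ptNK.
- move=> Psi hP; rewrite /Gk emb_wvN_ // Ftform // rmorph_sum; apply: eq_bigr => f _.
  rewrite rmorphM rmorph_prod; congr (_ * _); apply: eq_bigr => y _.
  by case: hP => _ ->.
Qed.

Definition qd (k : pt) := proj1_sig (cid (repr_ex k)).
Definition Qk (k : pt) := (qd k).1.
Definition dk (k : pt) := (qd k).2.

Lemma Qk_inj k : injective (Qk k).
Proof. by move: (proj2_sig (cid (repr_ex k))) => /= [h _ _ _]. Qed.
Lemma Qk_inAt k i : inAt (Qk k i).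
Proof. by move: (proj2_sig (cid (repr_ex k))) => /= [_ h _ _]; exact: h. Qed.
Lemma Qk_cov k x : inAt x -> exists i, Qk k i = x.
Proof. by move: (proj2_sig (cid (repr_ex k))) => /= [_ _ h _]; exact: h. Qed.
Lemma Gk_repr k Psi : inEc Psi ->
  Gk k Psi = \sum_(f : {ffun 'I_p -> 'I_16}) dk k f * \prod_(y < p) Psi (Qk k (f y)).
Proof. by move: (proj2_sig (cid (repr_ex k))) => /= [_ _ _ h]; exact: h. Qed.

End Repr.
Section Inv.
Variable R : realType.
Local Notation C := (R[i]).
Local Notation pt := (pt R).
Variables l1 n1 l2 n2 p : nat.
Hypotheses (hl : (l2 < l1)%N) (hn1 : (0 < n1 < l1)%N) (hn2 : (0 < n2 < l2)%N)
  (hk : (l1 ^ 2 + n1 ^ 2 = l2 ^ 2 + n2 ^ 2)%N).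
Variable Ft : 'rV[C]_8 -> 'rV[C]_8.
Hypothesis hpoly : homogPoly p Ft.
Hypothesis heq : Gamma_equivariant l1 n1 l2 n2 Ft.
Local Notation wv := (wv R l1 n1 l2 n2).
Local Notation inAt := (@inAt R l1 n1 l2 n2).
Local Notation emb := (@embEc R l1 n1 l2 n2).
Local Notation crd := (@coordEc R l1 n1 l2 n2).
Local Notation inEc := (@inEc R l1 n1 l2 n2).
Local Notation ptA := (ptA R l1 n1 l2 n2).
Local Notation kap2 := ((l1 ^ 2 + n1 ^ 2)%N%:R : R).
Hypothesis hrot : forall (th : R) (Phi : efield R),
      inEc Phi -> inEc (actO (rotmx th) Phi) ->
      eqEk kap2 (actO (rotmx th) (emb (Ft (crd Phi))))
               (emb (Ft (crd (actO (rotmx th) Phi)))).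
Local Notation inAtP_ := (inAtP hl hn1 hn2 hk).
Local Notation ptA_inj_ := (ptA_inj hl hn1 hn2 hk).
Local Notation emb_wv_ := (emb_wv hl hn1 hn2 hk).
Local Notation emb_wvN_ := (emb_wvN hl hn1 hn2 hk).
Local Notation inAt_circ_ := (inAt_circ hl hn1 hn2 hk).
Local Notation emb_inEc_ := (emb_inEc hl hn1 hn2 hk).
Local Notation emb_crd_ := (emb_crd hl hn1 hn2 hk).
Local Notation crd_emb_ := (crd_emb hl hn1 hn2 hk).
Local Notation ptA_circ_ := (ptA_circ R hl hn1 hn2 hk).
Local Notation G := (Gk l1 n1 l2 n2 Ft).
Local Notation Q := (Qk hl hn1 hn2 hk hpoly).
Local Notation d := (dk hl hn1 hn2 hk hpoly).
Local Notation Gk_repr_ := (Gk_repr hl hn1 hn2 hk hpoly).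
Local Notation Qk_inAt_ := (Qk_inAt hl hn1 hn2 hk hpoly).
Local Notation Qk_cov_ := (Qk_cov hl hn1 hn2 hk hpoly).
Local Notation om := (om R).

Lemma conjcD (x y : C) : conjc (x + y) = conjc x + conjc y.
Proof. exact: rmorphD. Qed.
Lemma conjc_sum (I : finType) (F : I -> C) : conjc (\sum_i F i) = \sum_i conjc (F i).
Proof. exact: rmorph_sum. Qed.
Lemma conjc_natb (b : bool) : conjc (b%:R : C) = b%:R.
Proof. by case: b; apply/eqP; rewrite eq_complex /= ?oppr0 !eqxx. Qed.
Lemma conjcKK (x : C) : conjc (conjc x) = x.
Proof. exact: conjcK. Qed.

Lemma PhiT_inEc (t : p.-tuple pt) xi : (forall x, inAt (tnth t x)) -> inEc (PhiT t xi).
Proof.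
move=> ht; split.
- move=> k; apply: contraR => hk'; rewrite /PhiT big1 // => x _.
  have -> : (k == tnth t x) = false by apply: contraNF hk' => /eqP ->; exact: ht.
  have -> : (k == ptN (tnth t x)) = false by apply: contraNF hk' => /eqP ->; rewrite inAtN ht.
  by rewrite !mul0r addr0.
- move=> k; rewrite /PhiT conjc_sum; apply: eq_bigr => x _.
  rewrite conjcD !conjcM !conjc_natb conjcKK.
  have -> : (ptN k == tnth t x) = (k == ptN (tnth t x)) by apply/eqP/eqP => [<-|->]; rewrite ptNK.
  have -> : (ptN k == ptN (tnth t x)) = (k == tnth t x) by apply/eqP/eqP => [/ptN_inj|->].
  by rewrite addrC.
Qed.

Definition Nn : C := \sum_(g : {ffun 'I_p -> 'I_p} | injectiveb g) 1.

Lemma Nn_neq0 : Nn != 0.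
Proof.
have hid : injectiveb [ffun y : 'I_p => y] by apply/injectiveP => a b; rewrite !ffunE.
rewrite /Nn (bigD1 _ hid) /=.
have hx : 0 <= \sum_(g : {ffun 'I_p -> 'I_p} | injectiveb g && (g != [ffun y => y])) (1 : C).
  by apply: sumr_ge0 => *; exact: ler01.
by rewrite paddr_eq0 ?ler01 // oner_eq0.
Qed.

Definition S (k : pt) (t : p.-tuple pt) : C :=
  \sum_(f : {ffun 'I_p -> 'I_16}) d k f *
     \sum_(g : {ffun 'I_p -> 'I_p} | injectiveb g) \prod_(y < p) (Q k (f y) == tnth t (g y))%:R.

Lemma closedG k (t : p.-tuple pt) (beta : 'I_p -> C) : (forall x, inAt (tnth t x)) ->
  \sum_(w : {ffun 'I_p -> 'I_4}) (\prod_(x < p) om (w x) ^+ 3) * G k (PhiT t (fun x => om (w x) * beta x))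
  = 4 ^+ p * (\prod_(x < p) beta x) * S k t.
Proof.
move=> ht.
transitivity (\sum_(w : {ffun 'I_p -> 'I_4}) \sum_(f : {ffun 'I_p -> 'I_16})
   (\prod_(x < p) om (w x) ^+ 3) * (d k f * \prod_(y < p) PhiT t (fun x => om (w x) * beta x) (Q k (f y)))).
  apply: eq_bigr => w _; rewrite Gk_repr_; last exact: PhiT_inEc.
  by rewrite mulr_sumr.
rewrite exchange_big /= /S mulr_sumr; apply: eq_bigr => f _.
rewrite mulrCA -(closed1 (fun y => Q k (f y))) mulr_sumr; apply: eq_bigr => w _.
by rewrite mulrCA.
Qed.

Definition Pol0 (k : pt) (t : p.-tuple pt) : C :=
  (\sum_(w : {ffun 'I_p -> 'I_4}) (\prod_(x < p) om (w x) ^+ 3) * G k (PhiT t (fun x => om (w x) * 1)))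
  / (4 ^+ p * Nn).

Lemma four_neq0 : (4 : C) ^+ p != 0.
Proof. by rewrite expf_neq0 // pnatr_eq0. Qed.

Lemma Pol0_S k t : (forall x, inAt (tnth t x)) -> Pol0 k t = S k t / Nn.
Proof.
move=> ht; rewrite /Pol0 closedG //.
have -> : \prod_(x < p) (1 : C) = 1 by rewrite big1.
have h4 := four_neq0; have hN := Nn_neq0.
by field; rewrite h4 hN.
Qed.

Lemma expiD (a b : R) : expi (a + b) = expi a * expi b.
Proof.
rewrite /expi cosD sinD; apply/eqP; rewrite eq_complex /=.
by apply/andP; split; apply/eqP; ring.
Qed.

Lemma expi0 : expi (0 : R) = 1.
Proof. by rewrite /expi cos0 sin0. Qed.

Lemma expi_conj (a : R) : conjc (expi a) = expi (- a).
Proof. by rewrite /expi cosN sinN. Qed.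

Lemma expi_neq0 (a : R) : expi a != 0.
Proof.
apply/negP => /eqP h; have := expiD a (- a).
by rewrite subrr expi0 h mul0r => /eqP; rewrite oner_eq0.
Qed.

Lemma expiNpi : expi (- pi : R) = -1.
Proof. by rewrite /expi cosN sinN cospi sinpi oppr0; apply/eqP; rewrite eq_complex /= oppr0 !eqxx. Qed.

Lemma prod_expi (u : 'I_p -> R) : \prod_(x < p) expi (u x) = expi (\sum_(x < p) u x).
Proof. by rewrite (big_morph (@expi R) expiD expi0). Qed.

Lemma inEc_T s tt (Phi : efield R) : inEc Phi -> inEc (actT s tt Phi).
Proof.
move=> [hs hc]; split.
  by move=> k; rewrite /actT => h; apply: hs; apply: contraNneq h => ->; rewrite mulr0.
move=> k; rewrite /actT hc conjcM expi_conj /ptN /=; congr (expi _ * _); ring.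
Qed.

Lemma GT s tt (Psi : efield R) k : inEc Psi ->
  G k (actT s tt Psi) = expi (- (s * k.1 + tt * k.2)) * G k Psi.
Proof.
move=> hP; move: heq; rewrite /Gamma_equivariant => -[_ [_ hT]].
have := hT s tt (crd Psi); rewrite emb_crd_ // => e.
rewrite /Gk e emb_crd_ //.
by apply: inEc_T; apply: emb_inEc_.
Qed.

Lemma PhiT_T s tt (t : p.-tuple pt) (xi : 'I_p -> C) :
  actT s tt (PhiT t xi) =
  PhiT t (fun x => expi (- (s * (tnth t x).1 + tt * (tnth t x).2)) * xi x).
Proof.
apply: funext => k; rewrite /actT /PhiT mulr_sumr; apply: eq_bigr => x _.
rewrite mulrDr; congr (_ + _).
  case: (eqVneq k (tnth t x)) => [->|ne]; first by rewrite ?eqxx !mul1r.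
  by rewrite ?(negbTE ne) !mul0r mulr0.
case: (eqVneq k (ptN (tnth t x))) => [->|ne]; last by rewrite ?(negbTE ne) !mul0r mulr0.
rewrite ?eqxx !mul1r conjcM expi_conj; congr (expi _ * _); rewrite /ptN /=; ring.
Qed.

Definition sumpt (t : p.-tuple pt) : pt :=
  (\sum_(x < p) (tnth t x).1, \sum_(x < p) (tnth t x).2).

Lemma S_sum k (t : p.-tuple pt) : (forall x, inAt (tnth t x)) -> S k t != 0 -> sumpt t = k.
Proof.
move=> ht hS; case: (eqVneq (sumpt t) k) => // hne; exfalso; apply: (negP hS).
set d1 := (sumpt t).1 - k.1; set d2 := (sumpt t).2 - k.2.
have hD : d1 ^+ 2 + d2 ^+ 2 != 0.
  apply: contra hne; rewrite paddr_eq0 ?sqr_ge0 // !sqrf_eq0 /d1 /d2 !subr_eq0 => h12.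
  case/andP: h12 => /eqP h1 /eqP h2; apply/eqP; exact: injective_projections.
set D := d1 ^+ 2 + d2 ^+ 2 in hD.
pose s := pi * d1 / D; pose tt := pi * d2 / D.
have hsd : s * d1 + tt * d2 = pi.
  by rewrite /s /tt /D; field; exact: hD.
pose e x := expi (- (s * (tnth t x).1 + tt * (tnth t x).2)).
have h1 := closedG k e ht.
have h2 : \sum_(w : {ffun 'I_p -> 'I_4}) (\prod_(x < p) om (w x) ^+ 3) *
              G k (PhiT t (fun x => om (w x) * e x))
          = expi (- (s * k.1 + tt * k.2)) * (4 ^+ p * (\prod_(x < p) (1 : C)) * S k t).
  rewrite -closedG // mulr_sumr; apply: eq_bigr => w _.
  rewrite mulrCA -GT; last exact: PhiT_inEc.
  rewrite PhiT_T; congr (_ * G k (PhiT t _)); apply: funext => x.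
  by rewrite /e mulr1 mulrC.
have hpe : \prod_(x < p) e x = - expi (- (s * k.1 + tt * k.2)).
  rewrite /e prod_expi sumrN big_split /= -!mulr_sumr.
  have -> : \sum_(i < p) (tnth t i).1 = d1 + k.1 by rewrite /d1 subrK.
  have -> : \sum_(i < p) (tnth t i).2 = d2 + k.2 by rewrite /d2 subrK.
  have -> : - (s * (d1 + k.1) + tt * (d2 + k.2)) = - (s * k.1 + tt * k.2) + - (s * d1 + tt * d2) by ring.
  by rewrite hsd expiD expiNpi mulrN1.
move: h2; rewrite h1 hpe big1 // mulr1 => h2.
move/eqP: h2; rewrite -subr_eq0 => /eqP h2.
have : (4 ^+ p * S k t) * (2 * expi (- (s * k.1 + tt * k.2))) = - (0 : C).
  by rewrite -h2; ring.
rewrite oppr0.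
move/eqP; rewrite mulf_eq0 => /orP [|]; last first.
  by rewrite mulf_eq0 (negbTE (expi_neq0 _)) pnatr_eq0.
by rewrite mulf_eq0 (negbTE four_neq0).
Qed.

Lemma PhiT_map (g : 'M[R]_2) (t : p.-tuple pt) xi : orthogonal2 g ->
  PhiT (map_tuple (mxapp g) t) xi = actO g (PhiT t xi).
Proof.
move=> og; apply: funext => k; rewrite /actO /PhiT; apply: eq_bigr => x _.
rewrite tnth_map -mxappN.
have e a : (k == mxapp g a) = (mxapp (invmx g) k == a).
  by apply/eqP/eqP => [->|<-]; rewrite ?orth_invK ?orth_Kinv.
by rewrite !e.
Qed.

Lemma Grot (th : R) (t : p.-tuple pt) k xi : onCircle kap2 k ->
  (forall x, inAt (tnth t x)) -> (forall x, inAt (mxapp (rotmx th) (tnth t x))) ->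
  G (mxapp (rotmx th) k) (PhiT (map_tuple (mxapp (rotmx th)) t) xi) = G k (PhiT t xi).
Proof.
move=> hkc ht ht'.
have h1 := PhiT_inEc xi ht.
have h2 : inEc (actO (rotmx th) (PhiT t xi)).
  by rewrite -(@PhiT_map (rotmx th) t xi (rot_orth th)); apply: PhiT_inEc => x; rewrite tnth_map.
have hc' : onCircle kap2 (mxapp (rotmx th) k) by rewrite (orth_circle _ _ (rot_orth th)).
have := @hrot th (PhiT t xi) h1 h2; rewrite /eqEk => /(_ _ hc').
rewrite /actO (orth_invK _ (rot_orth th)) => e.
by rewrite /Gk (@PhiT_map (rotmx th) t xi (rot_orth th)) -e.
Qed.

Lemma Gg1 (t : p.-tuple pt) k xi : (forall x, inAt (tnth t x)) ->
  G (mxapp (gamma1 R) k) (PhiT (map_tuple (mxapp (gamma1 R)) t) xi) = G k (PhiT t xi).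
Proof.
move=> ht; have hP := PhiT_inEc xi ht.
move: heq; rewrite /Gamma_equivariant => -[hg1 _].
have := hg1 (crd (PhiT t xi)); rewrite emb_crd_ // => e.
rewrite /Gk (@PhiT_map (gamma1 R) t xi (gamma1_orth R)) e emb_crd_.
  by rewrite /actO (orth_invK _ (gamma1_orth R)).
apply: inEc_act; [exact: (gamma1_orth R)| |exact: emb_inEc_].
by move=> x; apply: inAt_g1.
Qed.

Lemma Pol0_inv (m : 'M[R]_2) (t : p.-tuple pt) k : orthogonal2 m -> onCircle kap2 k ->
  (forall x, inAt (tnth t x)) -> (forall x, inAt (mxapp m (tnth t x))) ->
  Pol0 (mxapp m k) (map_tuple (mxapp m) t) = Pol0 k t.
Proof.
move=> om' hkc ht ht'.
suff h : forall xi, G (mxapp m k) (PhiT (map_tuple (mxapp m) t) xi) = G k (PhiT t xi).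
  by rewrite /Pol0; under eq_bigr do rewrite h.
move=> xi; have [th [hm|hm]] := orth_decomp om'.
- have et : map_tuple (mxapp m) t = map_tuple (mxapp (rotmx th)) t.
    by apply: eq_from_tnth => x; rewrite !tnth_map hm.
  rewrite hm et Grot // => x; by rewrite -hm.
- have et : map_tuple (mxapp m) t =
            map_tuple (mxapp (rotmx th)) (map_tuple (mxapp (gamma1 R)) t).
    by apply: eq_from_tnth => x; rewrite !tnth_map hm.
  rewrite hm et Grot ?Gg1 //.
  + by rewrite (orth_circle _ _ (gamma1_orth R)).
  + by move=> x; rewrite tnth_map; apply: inAt_g1.
  + by move=> x; rewrite tnth_map -hm.
Qed.

End Inv.
Lemma orth_mul (R : realType) (A B : 'M[R]_2) : orthogonal2 A -> orthogonal2 B -> orthogonal2 (A *m B).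
Proof.
move=> hA hB; rewrite /orthogonal2 trmx_mul -mulmxA (mulmxA A^T) hA mul1mx; exact: hB.
Qed.

Lemma orth1 (R : realType) : orthogonal2 (1%:M : 'M[R]_2).
Proof. by rewrite /orthogonal2 trmx1 mul1mx. Qed.

Lemma TS_sized (C : comRingType) (T : Type) (s : seq T) n (H H' : seq T -> C) (c : C) :
  (forall u, size u = n -> H u = c * H' u) -> TS s n H = c * TS s n H'.
Proof.
elim: n H H' => [|n IH] H H' h /=; first exact: h.
rewrite mulr_sumr; apply: eq_bigr => x _; apply: IH => u hu; apply: h => /=.
by rewrite hu.
Qed.

Section Main.
Variable R : realType.
Local Notation C := (R[i]).
Local Notation pt := (pt R).
Variables l1 n1 l2 n2 p : nat.
Hypotheses (hl : (l2 < l1)%N) (hn1 : (0 < n1 < l1)%N) (hn2 : (0 < n2 < l2)%N)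
  (hk : (l1 ^ 2 + n1 ^ 2 = l2 ^ 2 + n2 ^ 2)%N).
Variable Ft : 'rV[C]_8 -> 'rV[C]_8.
Hypothesis hpoly : homogPoly p Ft.
Hypothesis heq : Gamma_equivariant l1 n1 l2 n2 Ft.
Local Notation wv := (wv R l1 n1 l2 n2).
Local Notation inAt := (@inAt R l1 n1 l2 n2).
Local Notation emb := (@embEc R l1 n1 l2 n2).
Local Notation crd := (@coordEc R l1 n1 l2 n2).
Local Notation inEc := (@inEc R l1 n1 l2 n2).
Local Notation ptA := (ptA R l1 n1 l2 n2).
Local Notation kap2 := ((l1 ^ 2 + n1 ^ 2)%N%:R : R).
Hypothesis hrot : forall (th : R) (Phi : efield R),
      inEc Phi -> inEc (actO (rotmx th) Phi) ->
      eqEk kap2 (actO (rotmx th) (emb (Ft (crd Phi))))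
               (emb (Ft (crd (actO (rotmx th) Phi)))).
Local Notation inAtP_ := (inAtP hl hn1 hn2 hk).
Local Notation ptA_inj_ := (ptA_inj hl hn1 hn2 hk).
Local Notation emb_wv_ := (emb_wv hl hn1 hn2 hk).
Local Notation emb_wvN_ := (emb_wvN hl hn1 hn2 hk).
Local Notation inAt_circ_ := (inAt_circ hl hn1 hn2 hk).
Local Notation emb_inEc_ := (emb_inEc hl hn1 hn2 hk).
Local Notation emb_crd_ := (emb_crd hl hn1 hn2 hk).
Local Notation crd_emb_ := (crd_emb hl hn1 hn2 hk).
Local Notation ptA_circ_ := (ptA_circ R hl hn1 hn2 hk).
Local Notation G := (Gk l1 n1 l2 n2 Ft).
Local Notation Q := (Qk hl hn1 hn2 hk hpoly).
Local Notation d := (dk hl hn1 hn2 hk hpoly).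
Local Notation Gk_repr_ := (Gk_repr hl hn1 hn2 hk hpoly).
Local Notation Qk_inAt_ := (Qk_inAt hl hn1 hn2 hk hpoly).
Local Notation Qk_cov_ := (Qk_cov hl hn1 hn2 hk hpoly).
Local Notation Pol0' := (Pol0 l1 n1 l2 n2 Ft).
Local Notation S' := (S hl hn1 hn2 hk hpoly).
Local Notation Nn' := (Nn R p).
Local Notation Pol0_S_ := (Pol0_S hl hn1 hn2 hk hpoly).
Local Notation Pol0_inv_ := (Pol0_inv hl hn1 hn2 hk heq hrot).
Local Notation S_sum_ := (S_sum heq).

Definition tupl (u : seq pt) : p.-tuple pt := [tuple nth (0, 0) u i | i < p].

Definition Pk (k : pt) (t : p.-tuple pt) : C :=
  if sumpt t == k then
    (if pselect (exists g : 'M[R]_2, orthogonal2 g /\ forall x, inAt (mxapp g (tnth t x))) is left H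
     then Pol0' (mxapp (proj1_sig (cid H)) k) (map_tuple (mxapp (proj1_sig (cid H))) t) else 0)
  else 0.

Lemma Pk_sum k t : Pk k t != 0 -> sumpt t = k.
Proof. by rewrite /Pk; case: (eqVneq (sumpt t) k) => // _; rewrite eqxx. Qed.

Lemma Pk_At k (t : p.-tuple pt) : onCircle kap2 k -> (forall x, inAt (tnth t x)) ->
  Pk k t = if sumpt t == k then Pol0' k t else 0.
Proof.
move=> hkc ht; rewrite /Pk; case: ifP => // _.
case: pselect => [H|hn]; last first.
  by exfalso; apply: hn; exists 1%:M; split; [exact: orth1|move=> x; rewrite mxapp1].
case: (proj2_sig (cid H)) => og hg.
by apply: Pol0_inv_.
Qed.

Lemma Pk_eq k (t : p.-tuple pt) : onCircle kap2 k -> (forall x, inAt (tnth t x)) ->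
  Pk k t = S' k t / Nn'.
Proof.
move=> hkc ht; rewrite Pk_At //; case: eqP => [_|hne]; first exact: Pol0_S_.
case: (eqVneq (S' k t) 0) => [->|hS]; first by rewrite mul0r.
by exfalso; apply: hne; apply: S_sum_.
Qed.

Lemma sumpt_map (h : 'M[R]_2) (t : p.-tuple pt) :
  sumpt (map_tuple (mxapp h) t) = mxapp h (sumpt t).
Proof.
rewrite /sumpt /mxapp /=; congr pair;
  under eq_bigr do rewrite tnth_map /=;
  by rewrite big_split /= -!mulr_sumr.
Qed.

Lemma Pk_inv (h : 'M[R]_2) k (t : p.-tuple pt) : orthogonal2 h -> onCircle kap2 k ->
  Pk (mxapp h k) (map_tuple (mxapp h) t) = Pk k t.
Proof.
move=> oh hkc; rewrite /Pk sumpt_map (inj_eq (orth_inj oh)).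
case: ifP => // _.
case: pselect => [H1|n1']; case: pselect => [H2|n2'] //.
- case: (proj2_sig (cid H1)) => og1 hg1; case: (proj2_sig (cid H2)) => og2 hg2.
  set g1 := proj1_sig (cid H1) in og1 hg1 *; set g2 := proj1_sig (cid H2) in og2 hg2 *.
  pose m := g1 *m h *m invmx g2.
  have om : orthogonal2 m by rewrite /m; apply: orth_mul; [apply: orth_mul|apply: orth_invO].
  have hmg x : mxapp m (mxapp g2 x) = mxapp g1 (mxapp h x).
    by rewrite /m !mxappM orth_invK.
  have hc2 : onCircle kap2 (mxapp g2 k) by rewrite orth_circle.
  have ht2 : forall x, inAt (tnth (map_tuple (mxapp g2) t) x) by move=> x; rewrite tnth_map.
  have ht2' : forall x, inAt (mxapp m (tnth (map_tuple (mxapp g2) t) x)).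
    by move=> x; rewrite tnth_map hmg; move: (hg1 x); rewrite tnth_map.
  rewrite -(Pol0_inv_ om hc2 ht2 ht2') hmg; congr Pol0'.
  by apply: eq_from_tnth => x; rewrite !tnth_map hmg.
- exfalso; apply: n2'; case: (proj2_sig (cid H1)) => og1 hg1.
  exists (proj1_sig (cid H1) *m h); split; first exact: orth_mul.
  by move=> x; rewrite mxappM; move: (hg1 x); rewrite tnth_map.
- exfalso; apply: n1'; case: (proj2_sig (cid H2)) => og2 hg2.
  exists (proj1_sig (cid H2) *m invmx h); split; first by apply: orth_mul => //; apply: orth_invO.
  by move=> x; rewrite tnth_map mxappM orth_invK.
Qed.

Definition Hk (a : efield R) (k : pt) (u : seq pt) : C := Pk k (tupl u) * \prod_(y <- u) a y.

Definition Fm (a : efield R) (k : pt) : C :=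
  if pselect (finsupp kap2 a) is left H then TS (proj1_sig (cid H)) p (Hk a k) else 0.

Lemma Fformula a s k : fsupp kap2 a s -> Fm a k = TS s p (Hk a k).
Proof.
move=> hs; rewrite /Fm; case: pselect => [H|hn]; last by exfalso; apply: hn; exists s.
case: (proj2_sig (cid H)) => u0 a0 c0; case: hs => u1 a1 c1.
apply: (TS_indep (good := fun x => a x != 0)) => // u hu.
apply/eqP; rewrite /Hk mulf_eq0 prodf_seq_eq0; apply/orP; right.
move: hu; rewrite -has_predC; apply: sub_has => x /=; by rewrite negbK.
Qed.

Lemma nth_map0 (g : 'M[R]_2) (u : seq pt) i :
  nth (0, 0) (map (mxapp g) u) i = mxapp g (nth (0, 0) u i).
Proof.
case: (ltnP i (size u)) => hi; first by rewrite (nth_map (0, 0)).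
rewrite !nth_default ?size_map //.
by rewrite /mxapp /= !mulr0 addr0.
Qed.

Lemma tupl_map (g : 'M[R]_2) (u : seq pt) : tupl (map (mxapp g) u) = map_tuple (mxapp g) (tupl u).
Proof. by apply: eq_from_tnth => i; rewrite /tupl !tnth_map !tnth_ord_tuple nth_map0. Qed.

Lemma tupl_enum (g : 'I_p -> pt) : tupl (map g (enum 'I_p)) = [tuple g i | i < p].
Proof.
apply: eq_from_tnth => i; rewrite /tupl !tnth_map !tnth_ord_tuple (nth_map i) ?size_enum_ord //.
by rewrite nth_ord_enum.
Qed.

Lemma prod_enum (a : efield R) (g : 'I_p -> pt) :
  \prod_(y <- map g (enum 'I_p)) a y = \prod_(i < p) a (g i).
Proof. by rewrite big_map big_enum. Qed.

Lemma F_poly : isPolyVF kap2 p Fm.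
Proof.
exists Pk => a s hs k hkc.
rewrite (Fformula k hs) -(TS_nth (0, 0)); apply: eq_bigr => f _.
by rewrite /Hk tupl_enum prod_enum.
Qed.

Lemma F_E2 : E2equivariant kap2 Fm.
Proof.
move=> a [s hs]; split.
- move=> g og k hkc.
  have hs' : fsupp kap2 (actO g a) (map (mxapp g) s).
    case: hs => us as' cs; split.
    + by rewrite (map_inj_uniq (orth_inj og)).
    + by rewrite all_map; apply/allP => x hx /=; rewrite orth_circle //; exact: (allP as').
    + move=> x hx; apply/mapP; exists (mxapp (invmx g) x); first exact: cs.
      by rewrite orth_Kinv.
  have hkc' : onCircle kap2 (mxapp (invmx g) k) by rewrite (orth_circle _ _ (orth_invO og)).
  rewrite /actO (Fformula k hs') (Fformula (mxapp (invmx g) k) hs) TS_map; congr TS.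
  apply: funext => u; rewrite /Hk tupl_map big_map.
  have -> : Pk k (map_tuple (mxapp g) (tupl u)) = Pk (mxapp (invmx g) k) (tupl u).
    by rewrite -[in LHS](orth_Kinv k og) Pk_inv.
  by congr (_ * _); apply: eq_bigr => y _ /=; rewrite /actO orth_invK.
- move=> s1 s2 k hkc.
  have hs' : fsupp kap2 (actT s1 s2 a) s.
    case: hs => us as' cs; split => // x hx; apply: cs; apply: contraNneq hx => e.
    by rewrite /actT e mulr0.
  rewrite /actT (Fformula k hs') (Fformula k hs); apply: TS_sized => u hu.
  rewrite /Hk; case: (eqVneq (Pk k (tupl u)) 0) => [->|hP]; first by rewrite !mul0r mulr0.
  have hsum := Pk_sum hP.
  rewrite big_split /= mulrCA; congr (_ * _).
  rewrite -(big_morph (@expi R) (@expiD R) (expi0 R)); congr expi.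
  rewrite sumrN big_split /= -!mulr_sumr.
  have e1 : \sum_(y <- u) y.1 = (sumpt (tupl u)).1.
    rewrite /sumpt /= (big_nth (0, 0)) hu big_mkord; apply: eq_bigr => i _.
    by rewrite /tupl !tnth_map tnth_ord_tuple.
  have e2 : \sum_(y <- u) y.2 = (sumpt (tupl u)).2.
    rewrite /sumpt /= (big_nth (0, 0)) hu big_mkord; apply: eq_bigr => i _.
    by rewrite /tupl !tnth_map tnth_ord_tuple.
  by rewrite e1 e2 hsum.
Qed.

Lemma inner_sum (Qf : 'I_16 -> pt) (Qinj : injective Qf) (f : {ffun 'I_p -> 'I_16})
    (g : {ffun 'I_p -> 'I_p}) (X : 'I_16 -> C) : injective g ->
  \sum_(h : {ffun 'I_p -> 'I_16})
     (\prod_(y < p) (Qf (f y) == Qf (h (g y)))%:R) * \prod_(i < p) X (h i)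
  = \prod_(y < p) X (f y).
Proof.
move=> gi; have [g' gg' g'g] := injF_bij gi.
pose h0 : {ffun 'I_p -> 'I_16} := [ffun y => f (g' y)].
rewrite (bigD1 h0) //= [X in _ + X]big1 ?addr0.
  rewrite [X in X * _]big1 ?mul1r; last by move=> y _; rewrite /h0 ffunE gg' eqxx.
  rewrite [RHS](reindex_inj (can_inj g'g)); apply: eq_bigr => i _; by rewrite /h0 ffunE.
move=> h hne.
case: (pickP (fun x => h x != h0 x)) => [x hx|hn]; last first.
  by exfalso; move/eqP: hne; apply; apply/ffunP => x; move: (hn x) => /negbFE/eqP.
rewrite (bigD1 (g' x)) //= (inj_eq Qinj) g'g.
move: hx; rewrite /h0 ffunE eq_sym => /negbTE ->; by rewrite !mul0r.
Qed.

Lemma F_restr (Phi : efield R) : inEc Phi -> eqEk kap2 (Fm Phi) (emb (Ft (crd Phi))).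
Proof.
move=> hP k hkc.
pose s := map (Q k) (enum 'I_16).
have hs : fsupp kap2 Phi s.
  split.
  - have qi : injective (Q k) by exact: Qk_inj.
    by rewrite (map_inj_uniq qi) enum_uniq.
  - apply/allP => x /mapP [i _ ->]; apply: inAt_circ_; exact: Qk_inAt_.
  - move=> x hx; case: hP => hsP _; have [i <-] := Qk_cov_ k (hsP x hx).
    by apply: map_f; rewrite mem_enum.
rewrite (Fformula k hs) TS_map -TS_ffun.
change (emb (Ft (crd Phi)) k) with (G k Phi); rewrite Gk_repr_ //.
transitivity (\sum_(h : {ffun 'I_p -> 'I_16})
   \sum_(f : {ffun 'I_p -> 'I_16}) \sum_(g : {ffun 'I_p -> 'I_p} | injectiveb g)
     d k f / Nn' * ((\prod_(y < p) (Q k (f y) == Q k (h (g y)))%:R) * \prod_(i < p) Phi (Q k (h i)))).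
  apply: eq_bigr => h _; rewrite /Hk -map_comp tupl_enum prod_enum Pk_eq //; last first.
    by move=> x; rewrite tnth_map tnth_ord_tuple; exact: Qk_inAt_.
  have -> : S' k [tuple (Q k \o h) i | i < p] = \sum_(f : {ffun 'I_p -> 'I_16}) d k f *
      \sum_(g : {ffun 'I_p -> 'I_p} | injectiveb g) \prod_(y < p) (Q k (f y) == Q k (h (g y)))%:R.
    rewrite /S; apply: eq_bigr => f _; congr (_ * _); apply: eq_bigr => g _.
    by apply: eq_bigr => y _; rewrite tnth_map tnth_ord_tuple.
  rewrite !mulr_suml; apply: eq_bigr => f _.
  rewrite mulr_sumr !mulr_suml; apply: eq_bigr => g _.
  by rewrite /=; ring.
rewrite exchange_big /=; apply: eq_bigr => f _.
rewrite exchange_big /=.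
have hN := Nn_neq0 R p.
rewrite (eq_bigr (fun g => d k f / Nn' * \prod_(y < p) Phi (Q k (f y)))); last first.
  move=> g /injectiveP gi; rewrite -mulr_sumr; congr (_ * _).
  have qi : injective (Q k) by exact: Qk_inj.
  exact: (@inner_sum (Q k) qi f g (fun j => Phi (Q k j)) gi).
have -> : \sum_(g : {ffun 'I_p -> 'I_p} | injectiveb g) d k f / Nn' * \prod_(y < p) Phi (Q k (f y))
  = Nn' * (d k f / Nn' * \prod_(y < p) Phi (Q k (f y))).
  by rewrite /Nn mulr_suml; apply: eq_bigr => g _; rewrite mul1r.
by field.
Qed.

End Main.
Lemma Ec_finsupp (R : realType) (l1 n1 l2 n2 : nat)
  (hl : (l2 < l1)%N) (hn1 : (0 < n1 < l1)%N) (hn2 : (0 < n2 < l2)%N)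
  (hk : (l1 ^ 2 + n1 ^ 2 = l2 ^ 2 + n2 ^ 2)%N) (Phi : efield R) :
  inEc l1 n1 l2 n2 Phi -> finsupp ((l1 ^ 2 + n1 ^ 2)%N%:R : R) Phi.
Proof.
move=> [hs _]; exists (map (ptA R l1 n1 l2 n2) (enum 'I_16)); split.
- by rewrite (map_inj_uniq (ptA_inj hl hn1 hn2 hk)) enum_uniq.
- by apply/allP => x /mapP [i _ ->]; apply: ptA_circ.
- move=> x /hs /(inAtP hl hn1 hn2 hk) [i ->]; apply: map_f; by rewrite mem_enum.
Qed.

Theorem mainTheorem19 (R : realType) (l1 n1 l2 n2 p : nat)
  (hl : (l2 < l1)%N) (hn1 : (0 < n1 < l1)%N) (hn2 : (0 < n2 < l2)%N)
  (hk : (l1 ^ 2 + n1 ^ 2 = l2 ^ 2 + n2 ^ 2)%N)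
  (Ft : 'rV[R[i]]_8 -> 'rV[R[i]]_8)
  (hpoly : homogPoly p Ft)
  (heq : Gamma_equivariant l1 n1 l2 n2 Ft) :
  let kap2 : R := (l1 ^ 2 + n1 ^ 2)%N%:R in
  (exists F : efield R -> efield R,
      [/\ isPolyVF kap2 p F, E2equivariant kap2 F &
          forall Phi, inEc l1 n1 l2 n2 Phi ->
            eqEk kap2 (F Phi) (embEc l1 n1 l2 n2 (Ft (coordEc l1 n1 l2 n2 Phi)))])
  <->
  (forall (th : R) (Phi : efield R),
      inEc l1 n1 l2 n2 Phi -> inEc l1 n1 l2 n2 (actO (rotmx th) Phi) ->
      eqEk kap2 (actO (rotmx th) (embEc l1 n1 l2 n2 (Ft (coordEc l1 n1 l2 n2 Phi))))
               (embEc l1 n1 l2 n2 (Ft (coordEc l1 n1 l2 n2 (actO (rotmx th) Phi))))).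
Proof.
move=> kap2; split.
- case=> F [hpF hE hR] th Phi hP hP' k hkc.
  have hfin := Ec_finsupp hl hn1 hn2 hk hP.
  have ro := rot_orth th.
  have hkc' : onCircle kap2 (mxapp (invmx (rotmx th)) k).
    by rewrite (orth_circle _ _ (orth_invO ro)).
  have e1 := hR Phi hP; rewrite /eqEk in e1.
  have e2 := hR _ hP'; rewrite /eqEk in e2.
  rewrite /actO -(e1 _ hkc') -(e2 _ hkc).
  have [hO _] := hE Phi hfin.
  have := hO _ ro; rewrite /eqEk => /(_ _ hkc) ->.
  by [].
- move=> hrot.
  exists (Fm l1 n1 l2 n2 p Ft); split.
  + exact: F_poly.
  + exact: (F_E2 p hl hn1 hn2 hk heq hrot).
  + move=> Phi hP; exact: (F_restr hl hn1 hn2 hk hpoly heq hrot hP).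
Qed.
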